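(* Let $\mathbf P=(P,\leq,{}',0,1)$ be an orthogonal lub-complete poset. Then the following conditions are equivalent: (i) $\mathbf P$ is an orthomodular poset. (ii) $\mathbf P$ satisfies $x\leq y$ if and only if $x\rightarrow_K y=1$ for all $x,y\in P$. (iii) $\mathbf P$ satisfies $x\leq y$ if and only if $x\rightarrow_N y=1$ for all $x,y\in P$.
   Context: $(P,\leq,{}',0,1)$ is a bounded poset with an antitone involution ${}'$; orthogonal means $x\leq y'$ implies $x\vee y$ exists; lub-complete means for every lower bound $x$ of a finite subset $M$ there is a maximal lower bound of $M$ above $x$; orthomodular means orthogonal and $x\leq y$ implies $x\vee(y\wedge x')=y$. For $A\subseteq P$, $L(A)$, $U(A)$ are the lower and upper cones, $\mathrm{Max}\,A$, $\mathrm{Min}\,A$ the sets of maximal and minimal elements; joins/meets with sets are elementwise. Kalmbach implication: $x\rightarrow_K y:=\mathrm{Max}\,L(x',y)\vee \mathrm{Max}\,L(x',y')\vee (x\wedge \mathrm{Min}\,U(x',y))$; non-tolens implication: $x\rightarrow_N y:=y'\rightarrow_K x'$. ''$=1$'' means equal to $\{1\}$. *)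

(* Defs.v *)
From Stdlib Require Import List.

Section PosetDefs.
Variable P : Type.
Variable le : P -> P -> Prop.
Variable c : P -> P.
Variables zero one : P.

Definition bounded_poset_antitone_involution : Prop :=
  (forall x, le x x) /\
  (forall x y, le x y -> le y x -> x = y) /\
  (forall x y z, le x y -> le y z -> le x z) /\
  (forall x, le zero x /\ le x one) /\
  (forall x y, le x y -> le (c y) (c x)) /\
  (forall x, c (c x) = x).

Definition is_sup (x y s : P) : Prop :=
  le x s /\ le y s /\ (forall u, le x u -> le y u -> le s u).
Definition is_inf (x y m : P) : Prop :=
  le m x /\ le m y /\ (forall u, le u x -> le u y -> le u m).

Definition Lc (A : P -> Prop) : P -> Prop := fun x => forall a, A a -> le x a.
Definition Uc (A : P -> Prop) : P -> Prop := fun x => forall a, A a -> le a x.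
Definition pair_set (x y : P) : P -> Prop := fun t => t = x \/ t = y.

Definition MaxS (A : P -> Prop) : P -> Prop :=
  fun x => A x /\ (forall y, A y -> le x y -> y = x).
Definition MinS (A : P -> Prop) : P -> Prop :=
  fun x => A x /\ (forall y, A y -> le y x -> y = x).

Definition orthogonal : Prop :=
  forall x y, le x (c y) -> exists s, is_sup x y s.

Definition lub_complete : Prop :=
  forall (M : list P) (x : P), Lc (fun m => In m M) x ->
    exists w, MaxS (Lc (fun m => In m M)) w /\ le x w.

Definition orthomodular : Prop :=
  orthogonal /\
  forall x y, le x y -> exists m, is_inf y (c x) m /\ is_sup x m y.

(* Kalmbach implication, a subset of P; joins/meets with sets are elementwise:
   x ->K y = Max L(x',y) v Max L(x',y') v (x ^ Min U(x',y)) *)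
Definition kalmbach (x y : P) : P -> Prop :=
  fun t => exists a b d e,
    MaxS (Lc (pair_set (c x) y)) a /\
    MaxS (Lc (pair_set (c x) (c y))) b /\
    MinS (Uc (pair_set (c x) y)) d /\
    (exists ab, is_sup a b ab /\ is_inf x d e /\ is_sup ab e t).

Definition nontolens (x y : P) : P -> Prop := kalmbach (c y) (c x).

Definition is_one (A : P -> Prop) : Prop := forall t, A t <-> t = one.

End PosetDefs.

Arguments bounded_poset_antitone_involution {P}.
Arguments is_sup {P}. Arguments is_inf {P}. Arguments Lc {P}. Arguments Uc {P}.
Arguments pair_set {P}. Arguments MaxS {P}. Arguments MinS {P}.
Arguments orthogonal {P}. Arguments lub_complete {P}. Arguments orthomodular {P}.
Arguments kalmbach {P}. Arguments nontolens {P}. Arguments is_one {P}.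

(* Main.v *)
Require Import Defs.
From Stdlib Require Import List.

Theorem theorem6 (P : Type) (le : P -> P -> Prop) (c : P -> P) (zero one : P) :
  bounded_poset_antitone_involution le c zero one ->
  orthogonal le c ->
  lub_complete le ->
  ((orthomodular le c <->
      (forall x y, le x y <-> is_one one (kalmbach le c x y))) /\
   (orthomodular le c <->
      (forall x y, le x y <-> is_one one (nontolens le c x y)))).
Proof.
  intros [refl [antisym [trans [bnd [anti invol]]]]] Horth _.
  assert (top : forall x, le x one) by (intro x; apply bnd).
  assert (bot : forall x, le zero x) by (intro x; apply bnd).
  assert (c0 : c zero = one).
  { apply antisym; [apply top|]. rewrite <- (invol one). apply anti, bot. }
  assert (c1 : c one = zero) by (rewrite <- c0; apply invol).
  assert (lec : forall x y, le x (c y) -> le y (c x)).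
  { intros x y H. rewrite <- (invol y). apply anti, H. }
  assert (lecc : forall x y, le (c y) (c x) -> le x y).
  { intros x y H. rewrite <- (invol x), <- (invol y). apply anti, H. }
  assert (infex : forall x y, le x y -> exists m, is_inf le y (c x) m).
  { intros x y Hxy. destruct (Horth (c y) x) as [s [s1 [s2 s3]]].
    { apply anti, Hxy. }
    exists (c s). split; [|split].
    - apply lecc. rewrite invol. exact s1.
    - apply anti, s2.
    - intros u h1 h2. apply lecc. rewrite invol. apply s3.
      + apply anti, h1.
      + rewrite <- (invol x). apply anti, h2. }
  assert (supC : forall x y s, is_sup le x y s -> is_sup le y x s).
  { intros x y s [a [b d]]. split; [|split]; auto. }
  assert (K : orthomodular le c <->
      (forall x y, le x y <-> is_one one (kalmbach le c x y))).
  { split.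
    - intros [_ OM].
      assert (compl : forall x, is_sup le x (c x) one).
      { intro x. destruct (OM x one (top x)) as [m [[m1 [m2 m3]] [s1 [s2 s3]]]].
        assert (m = c x) by (apply antisym; auto).
        subst m. split; [|split]; auto. }
      assert (keyL : forall p q, le p q -> (forall u, le p u -> le (c q) u -> u = one) -> p = q).
      { intros p q Hpq Hu. destruct (OM p q Hpq) as [m [[m1 [m2 m3]] [s1 [s2 s3]]]].
        assert (Hm : c m = one).
        { apply Hu.
          - rewrite <- (invol p). apply anti, m2.
          - apply anti, m1. }
        assert (m = zero) by (rewrite <- (invol m), Hm; exact c1).
        subst m. apply antisym; auto. }
      intros x y. split.
      + intro Hxy. destruct (infex x y Hxy) as [m [m1 [m2 m3]]].
        destruct (OM x y Hxy) as [m' [Hm' Hs']].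
        assert (m' = m).
        { destruct Hm' as [a1 [a2 a3]]. apply antisym; auto. }
        subst m'.
        assert (cycx : le (c y) (c x)) by (apply anti, Hxy).
        intro t. split.
        * intros [a [b [d [e [[aL aM] [[bL bM] [[dU dM] [ab [[ab1 [ab2 ab3]] [[e1 [e2 e3]] [t1 [t2 t3]]]]]]]]]]]].
          apply antisym; [apply top|].
          assert (bey : b = c y).
          { symmetry; apply bM.
            - intros z [->| ->]; auto.
            - apply bL. right. reflexivity. }
          assert (dey : d = one).
          { apply antisym; [apply top|]. apply (proj2 (proj2 (compl x))).
            - apply (trans _ y); auto. apply dU. right; reflexivity.
            - apply dU. left; reflexivity. }
          subst d.
          assert (aem : a = m).
          { symmetry; apply aM.
            - intros z [->| ->]; auto.
            - apply m3; apply aL; [right|left]; reflexivity. }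
          subst a b.
          apply (proj2 (proj2 (compl y))).
          -- apply (proj2 (proj2 Hs')).
             ++ apply (trans _ e); auto.
             ++ apply (trans _ ab); auto.
          -- apply (trans _ ab); auto.
        * intros ->.
          destruct (Horth m (c y)) as [ab [ab1 [ab2 ab3]]].
          { rewrite invol. exact m1. }
          exists m, (c y), one, x. split; [|split; [|split]].
          -- split.
             ++ intros z [->| ->]; auto.
             ++ intros z zL hz. apply antisym; auto. apply m3; apply zL; [right|left]; reflexivity.
          -- split.
             ++ intros z [->| ->]; auto.
             ++ intros z zL hz. apply antisym; auto. apply zL. right; reflexivity.
          -- split.
             ++ intros z [->| ->]; auto.
             ++ intros z zU hz. apply antisym; auto. apply (proj2 (proj2 (compl x))).
                ** apply (trans _ y); auto. apply zU. right; reflexivity.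
                ** apply zU. left; reflexivity.
          -- exists ab. split; [split; [|split]; auto|split].
             ++ split; [|split]; auto.
             ++ split; [|split]; auto.
                intros u u1 u2. apply (proj2 (proj2 (compl y))).
                ** apply (proj2 (proj2 Hs')); auto. apply (trans _ ab); auto.
                ** apply (trans _ ab); auto.
      + intro H1. destruct (proj2 (H1 one) eq_refl)
          as [a [b [d [e [[aL aM] [[bL bM] [[dU dM] [ab [[ab1 [ab2 ab3]] [[e1 [e2 e3]] [t1 [t2 t3]]]]]]]]]]]].
        assert (abx : ab = c x).
        { apply keyL.
          - apply ab3; [apply aL|apply bL]; left; reflexivity.
          - intros u u1 u2. rewrite invol in u2. apply antisym; [apply top|].
            apply t3; auto. apply (trans _ x); auto. }
        assert (d1 : d = one).
        { apply antisym; [apply top|]. apply t3; auto. rewrite abx. apply dU. left; reflexivity. }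
        assert (bcy : b = c y).
        { apply keyL.
          - apply bL. right; reflexivity.
          - intros u u1 u2. rewrite invol in u2. subst d. apply dM; [|apply top].
            intros z [->| ->]; auto. rewrite <- abx. apply ab3; auto.
            apply (trans _ y); auto. apply aL. right; reflexivity. }
        apply lecc. rewrite <- bcy. apply bL. left; reflexivity.
    - intro H2. split; [exact Horth|].
      assert (compl : forall x, is_sup le x (c x) one).
      { intro x. destruct (proj2 (proj1 (H2 x one) (top x) one) eq_refl)
          as [a [b [d [e [[aL aM] [[bL bM] [[dU dM] [ab [[ab1 [ab2 ab3]] [[e1 [e2 e3]] [t1 [t2 t3]]]]]]]]]]]].
        split; [|split]; auto.
        intros u u1 u2. apply t3.
        - apply ab3; apply (trans _ (c x)); auto; [apply aL|apply bL]; left; reflexivity.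
        - apply (trans _ x); auto. }
      intros x y Hxy. destruct (infex x y Hxy) as [m [m1 [m2 m3]]].
      exists m. split; [split; [|split]; auto|].
      destruct (Horth x m) as [s [s1 [s2 s3]]].
      { apply lec, m2. }
      assert (sy : le s y) by (apply s3; auto).
      destruct (Horth (c y) s) as [v [v1 [v2 v3]]].
      { apply anti, sy. }
      assert (cvs : le (c v) s).
      { apply (trans _ m); auto. apply m3.
        - rewrite <- (invol y). apply anti, v1.
        - apply anti. apply (trans _ s); auto. }
      assert (v1' : v = one).
      { apply antisym; [apply top|]. apply (proj2 (proj2 (compl s))); [exact v2|].
        rewrite <- (invol v). apply anti, cvs. }
      subst v.
      assert (ys : le y s).
      { apply H2. intro t. split.
        - intros [a [b [d [e [[aL aM] [[bL bM] [[dU dM] [ab [[ab1 [ab2 ab3]] [[e1 [e2 e3]] [t1 [t2 t3]]]]]]]]]]]].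
          apply antisym; [apply top|].
          assert (d = one).
          { apply antisym; [apply top|]. apply v3; apply dU; [left|right]; reflexivity. }
          subst d.
          apply (proj2 (proj2 (compl y))).
          + apply (trans _ e); auto.
          + assert (hb : b = c y).
            { symmetry; apply bM.
              * intros z [->| ->]; [apply refl|apply anti, sy].
              * apply bL. left; reflexivity. }
            apply (trans _ ab); [rewrite <- hb; exact ab2| exact t1].
        - intros ->. exists zero, (c y), one, y. split; [|split; [|split]].
          + split.
            * intros z [->| ->]; auto.
            * intros z zL _. assert (cz : c z = one).
              { apply antisym; [apply top|]. apply (proj2 (proj2 (compl y))).
                - apply lec. apply zL; left; reflexivity.
                - apply anti. apply (trans _ s); [|exact sy].
                  apply zL; right; reflexivity. }
              rewrite <- (invol z), cz. exact c1.
          + split.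
            * intros z [->| ->]; [apply refl|apply anti, sy].
            * intros z zL hz. apply antisym; auto. apply zL; left; reflexivity.
          + split.
            * intros z [->| ->]; auto.
            * intros z zU hz. apply antisym; auto. apply v3; apply zU; [left|right]; reflexivity.
          + exists (c y). split; [|split].
            * split; [|split]; auto.
            * split; [|split]; auto.
            * apply supC, compl. }
      assert (s = y) by (apply antisym; auto). subst s.
      split; [|split]; auto. }
  split; [exact K|].
  rewrite K. split.
  - intros H x y. unfold nontolens. rewrite <- H. split.
    + intro h; apply anti, h.
    + apply lecc.
  - intros H x y. unfold nontolens in H.
    rewrite <- (invol x) at 2. rewrite <- (invol y) at 2. rewrite <- H. split.
    + intro h; apply anti, h.
    + apply lecc.
Qed.
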